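(* Let $\mathcal H$ be a Hilbert space of dimension $d$, let $H(t_i)=\sum_l E^i_l\Pi^i_l$ and $H(t_f)=\sum_k E^f_k\Pi^f_k$ be Hermitian operators with spectral projectors $\Pi^i_l,\Pi^f_k$, let $\Phi$ be a CPTP map on $\mathcal H$ and $\beta>0$. Let $\gamma_{\beta,i}=e^{-\beta H(t_i)}/\mathcal Z_{\beta,i}$, $\gamma_{\beta,f}=e^{-\beta H(t_f)}/\mathcal Z_{\beta,f}$, $\Delta F=-\beta^{-1}\ln(\mathcal Z_{\beta,f}/\mathcal Z_{\beta,i})$. Let $\rho_i$ be a density operator decomposed as $$\rho_i=(1-a)\gamma_{\beta,i}+a(1-c)\tau_d+ac\,\tau_c,$$ where $a$ is the weight of athermality of $\rho_i$ with respect to $\gamma_{\beta,i}$ with minimal athermal state $\tau$, and $\tau=(1-c)\tau_d+c\tau_c$ with $c$ the weight of coherence of $\tau$ with respect to the eigenbasis of $H(t_i)$, $\tau_d$ a density operator diagonal in that basis and $\tau_c$ a density operator. Then the EPM average satisfies $$\big\langle e^{-\beta(\Delta E-\Delta F)}\big\rangle=\Big\{(1-a)d+a(1-c)\mathrm{Tr}(\gamma_{\beta,i}^{-1}\tau_d)+ac\,\mathrm{Tr}(\gamma_{\beta,i}^{-1}\tau_c)\Big\}\Big\{(1-a)\mathrm{Tr}(\gamma_{\beta,f}\Phi[\gamma_{\beta,i}])+a(1-c)\mathrm{Tr}(\gamma_{\beta,f}\Phi[\tau_d])+ac\,\mathrm{Tr}(\gamma_{\beta,f}\Phi[\tau_c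])\Big\}.$$
   Context: EPM statistics: for initial state $\rho_i$, $p^{l,k}=\mathrm{Tr}(\rho_i\Pi^i_l)\mathrm{Tr}(\Phi[\rho_i]\Pi^f_k)$, $\Delta E_{l,k}=E^f_k-E^i_l$, and $\langle g(\Delta E)\rangle=\sum_{l,k}p^{l,k}g(\Delta E_{l,k})$. Weight of athermality: $A_w(\rho)=\min_{\tau\in\mathscr D(\mathcal H)}\{a\ge0:\rho=(1-a)\gamma_{\beta,i}+a\tau\}$ ($\mathscr D(\mathcal H)$ = density operators); $\tau$ attaining it is the minimal athermal state. Weight of coherence with respect to a fixed basis: $C_w(\tau)=\min\{c\ge0:\tau=(1-c)\sigma+c\tau',\ \sigma \text{ diagonal in the basis},\ \tau'\in\mathscr D(\mathcal H)\}$, with $\tau_d=\sigma$, $\tau_c=\tau'$ an optimal pair. *)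

(* Defs.v *)
From HB Require Import structures.
From mathcomp Require Import all_boot all_order all_algebra.
From mathcomp Require Import all_classical all_reals.
From mathcomp.analysis Require Import sequences exp.
From mathcomp Require Import complex.
Set Implicit Arguments. Unset Strict Implicit. Unset Printing Implicit Defensive.
Import Order.TTheory GRing.Theory Num.Theory.
Local Open Scope ring_scope.
Local Open Scope complex_scope.

Section QDefs.
Variable R : realType.
Local Notation C := R[i].
Variable d : nat.

Definition adjmx (A : 'M[C]_d) : 'M[C]_d := (map_mx Num.conj A)^T.
Definition adjcv (v : 'cV[C]_d) : 'rV[C]_d := (map_mx Num.conj v)^T.

(* positive semidefinite: <v, A v> is real nonnegative for every v *)
Definition psd (A : 'M[C]_d) : Prop := forall v : 'cV[C]_d, 0 <= (adjcv v *m A *m v) 0 0.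

Definition density (A : 'M[C]_d) : Prop := psd A /\ \tr A = 1.

Definition unitary (U : 'M[C]_d) : Prop := adjmx U *m U = 1%:M.

(* A is diagonal in the orthonormal basis given by the columns of U *)
Definition diag_in (U A : 'M[C]_d) : Prop := is_diag_mx (adjmx U *m A *m U).

(* Positive semidefiniteness of the n x n block operator with blocks X a b,
   written out literally. *)
Definition block_psd (n : nat) (X : 'I_n -> 'I_n -> 'M[C]_d) : Prop :=
  forall v : 'I_n -> 'cV[C]_d,
    0 <= \sum_(a < n) \sum_(b < n) (adjcv (v a) *m X a b *m v b) 0 0.

Definition CPTP (Phi : {linear 'M[C]_d -> 'M[C]_d}) : Prop :=
  (forall n (X : 'I_n -> 'I_n -> 'M[C]_d),
      block_psd X -> block_psd (fun a b => Phi (X a b)))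
  /\ (forall A, \tr (Phi A) = \tr A).

Definition spectral (m : nat) (E : 'I_m -> R) (P : 'I_m -> 'M[C]_d) : Prop :=
  injective E
  /\ (forall l, adjmx (P l) = P l)
  /\ (forall l l', P l *m P l' = if l == l' then P l else 0)
  /\ (forall l, P l != 0)
  /\ \sum_(l < m) P l = 1%:M.

Definition spec_fun (m : nat) (E : 'I_m -> R) (P : 'I_m -> 'M[C]_d) (f : R -> R)
  : 'M[C]_d := \sum_(l < m) (f (E l))%:C *: P l.

Definition hamiltonian m (E : 'I_m -> R) P := spec_fun E P id.

Definition partZ m (E : 'I_m -> R) P (beta : R) : R :=
  complex.Re (\tr (spec_fun E P (fun x => expR (- beta * x)))).

Definition gibbs m (E : 'I_m -> R) P (beta : R) : 'M[C]_d :=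
  ((partZ E P beta)^-1)%:C *: spec_fun E P (fun x => expR (- beta * x)).

Definition freeEnergyDiff mi (Ei : 'I_mi -> R) Pi mf (Ef : 'I_mf -> R) Pf
  (beta : R) : R :=
  - beta^-1 * ln (partZ Ef Pf beta / partZ Ei Pi beta).

Definition epm_p mi (Pi : 'I_mi -> 'M[C]_d) mf (Pf : 'I_mf -> 'M[C]_d)
  (Phi : {linear 'M[C]_d -> 'M[C]_d}) (rho : 'M[C]_d) (l : 'I_mi) (k : 'I_mf) : C :=
  \tr (rho *m Pi l) * \tr (Phi rho *m Pf k).

Definition epm_avg mi (Ei : 'I_mi -> R) Pi mf (Ef : 'I_mf -> R) Pf
  Phi rho (g : R -> R) : C :=
  \sum_(l < mi) \sum_(k < mf) epm_p Pi Pf Phi rho l k * (g (Ef k - Ei l))%:C.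

Definition weight_athermality (rho gam : 'M[C]_d) (a : R) (tau : 'M[C]_d) : Prop :=
  [/\ 0 <= a, density tau, rho = (1 - a)%:C *: gam + a%:C *: tau
   & forall (a' : R) (tau' : 'M[C]_d), 0 <= a' -> density tau' ->
       rho = (1 - a')%:C *: gam + a'%:C *: tau' -> a <= a'].

Definition weight_coherence (U tau : 'M[C]_d) (c : R) (sig tau' : 'M[C]_d) : Prop :=
  [/\ 0 <= c, density sig /\ diag_in U sig, density tau',
      tau = (1 - c)%:C *: sig + c%:C *: tau'
   & forall (c' : R) (s2 t2 : 'M[C]_d), 0 <= c' -> density s2 -> diag_in U s2 ->
       density t2 -> tau = (1 - c')%:C *: s2 + c'%:C *: t2 -> c <= c'].

End QDefs.

(* Main.v *)
Require Import Defs.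
From HB Require Import structures.
From mathcomp Require Import all_boot all_order all_algebra.
From mathcomp Require Import all_classical all_reals.
From mathcomp.analysis Require Import sequences exp.
From mathcomp Require Import complex.
From mathcomp Require Import ring lra.
Import Order.TTheory GRing.Theory Num.Theory.
Local Open Scope ring_scope.
Local Open Scope complex_scope.

Lemma trP_gt0 (R : realType) d (P : 'M[R[i]]_d) :
  adjmx P = P -> P *m P = P -> P != 0 -> 0 < \tr P.
Proof.
move=> hA hI hnz.
have -> : \tr P = \tr (adjmx P *m P) by rewrite hA hI.
rewrite /mxtrace.
under eq_bigr => i _ do rewrite mxE.
under eq_bigr => i _ do under eq_bigr => j _ do rewrite !mxE.
have ge : forall i j : 'I_d, 0 <= (P j i)^* * P j i by move=> i j; rewrite mulrC mul_conjC_ge0.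
rewrite lt_def; apply/andP; split; last first.
  by apply: sumr_ge0 => i _; apply: sumr_ge0 => j _; apply: ge.
apply/negP => /eqP H0; move/negP: hnz; apply; apply/eqP/matrixP => j i.
rewrite mxE.
have H1 := psumr_eq0P (fun i _ => sumr_ge0 _ (fun j _ => ge i j)) H0 (i:=i) isT.
have /eqP := psumr_eq0P (fun j _ => ge i j) H1 (i:=j) isT.
by rewrite mulrC mul_conjC_eq0 => /eqP.
Qed.

Lemma tr_sum (R : realType) d m (F : 'I_m -> 'M[R[i]]_d) :
  \tr (\sum_(l < m) F l) = \sum_(l < m) \tr (F l).
Proof. exact: raddf_sum. Qed.

Lemma posC (R : realType) (x : R[i]) : 0 < x -> 0 < complex.Re x /\ x = (complex.Re x)%:C.
Proof. case: x => r s; rewrite ltcE /= => /andP [/eqP -> ->]; done. Qed.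

Lemma partZ_gt0 (R : realType) d m (E : 'I_m -> R) (P : 'I_m -> 'M[R[i]]_d) beta : (0 < d)%N ->
  spectral E P -> 0 < partZ E P beta /\
  \tr (spec_fun E P (fun x => expR (- beta * x))) = (partZ E P beta)%:C.
Proof.
move=> d0 [_ [hA [hO [hnz hS]]]].
suff: 0 < \tr (spec_fun E P (fun x => expR (- beta * x))) by move/posC.
rewrite /spec_fun tr_sum.
case: m E P hA hO hnz hS => [|m] E P hA hO hnz hS.
  move/matrixP: hS => /(_ (Ordinal d0) (Ordinal d0)).
  by rewrite big_ord0 !mxE eqxx /= => /eqP; rewrite eq_sym oner_eq0.
have gt : forall l, 0 < \tr ((expR (- beta * E l))%:C *: P l).
  move=> l; rewrite mxtraceZ mulr_gt0 //; first by rewrite ltcR expR_gt0.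
  by apply: trP_gt0; rewrite // hO eqxx.
rewrite big_ord_recl; apply: (lt_le_trans (gt ord0)).
rewrite lerDl.
by apply: sumr_ge0 => l _; apply: ltW.
Qed.

Lemma sum_if (V : nmodType) m (i : 'I_m) (F : 'I_m -> V) :
  \sum_(j < m) (if i == j then F j else 0) = F i.
Proof. by rewrite -big_mkcond /= (big_pred1 i) // => j; rewrite /= eq_sym. Qed.

Lemma gibbs_inv (R : realType) d m (E : 'I_m -> R) (P : 'I_m -> 'M[R[i]]_d) beta :
  (0 < d)%N -> spectral E P ->
  invmx (gibbs E P beta) = \sum_(l < m) (partZ E P beta * expR (beta * E l))%:C *: P l
  /\ gibbs E P beta \in unitmx.
Proof.
move=> d0 hs; have [Zp _] := @partZ_gt0 R d m E P beta d0 hs.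
case: hs => [_ [hA [hO [hnz hS]]]].
set M := \sum_(l < m) _.
suff hM : gibbs E P beta *m M = 1%:M.
  have [hu _] := mulmx1_unit hM.
  by split=> //; rewrite -[RHS](mulKmx hu M) hM mulmx1.
rewrite /gibbs /spec_fun -scalemxAl mulmx_suml.
under eq_bigr => l _ do rewrite -scalemxAl mulmx_sumr.
under eq_bigr => l _ do under eq_bigr => l' _ do rewrite -scalemxAr hO.
under eq_bigr => l _ do under eq_bigr => l' _ do rewrite (fun_if (fun X => _ *: X)) scaler0.
under eq_bigr => l _ do rewrite sum_if.
rewrite -[RHS]hS scaler_sumr; apply: eq_bigr => l _.
rewrite !scalerA -!rmorphM.
rewrite mulrACA mulVf ?gt_eqF // mul1r -expRD mulNr addNr expR0.
by rewrite rmorph1 scale1r.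
Qed.

Lemma tr_gibbs (R : realType) d m (E : 'I_m -> R) (P : 'I_m -> 'M[R[i]]_d) beta X :
  \tr (gibbs E P beta *m X) =
  \sum_(l < m) \tr (X *m P l) * ((partZ E P beta)^-1 * expR (- beta * E l))%:C.
Proof.
rewrite mxtrace_mulC /gibbs -scalemxAr mxtraceZ /spec_fun mulmx_sumr tr_sum mulr_sumr.
apply: eq_bigr => l _; rewrite -scalemxAr mxtraceZ rmorphM.
by rewrite [RHS]mulrC -mulrA.
Qed.

Theorem mainTheorem3 (R : realType) (d : nat)
  (mi : nat) (Ei : 'I_mi -> R) (Pi : 'I_mi -> 'M[R[i]]_d)
  (mf : nat) (Ef : 'I_mf -> R) (Pf : 'I_mf -> 'M[R[i]]_d)
  (Phi : {linear 'M[R[i]]_d -> 'M[R[i]]_d}) (beta : R)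
  (U : 'M[R[i]]_d)
  (rho tau taud tauc : 'M[R[i]]_d) (a c : R) :
  spectral Ei Pi -> spectral Ef Pf -> CPTP Phi -> 0 < beta ->
  unitary U -> diag_in U (hamiltonian Ei Pi) ->
  density rho ->
  weight_athermality rho (gibbs Ei Pi beta) a tau ->
  weight_coherence U tau c taud tauc ->
  let gi := gibbs Ei Pi beta in
  let gf := gibbs Ef Pf beta in
  let dF := freeEnergyDiff Ei Pi Ef Pf beta in
  epm_avg Ei Pi Ef Pf Phi rho (fun dE => expR (- beta * (dE - dF))) =
    ((1 - a)%:C * d%:R
       + (a * (1 - c))%:C * \tr (invmx gi *m taud)
       + (a * c)%:C * \tr (invmx gi *m tauc))
  * ((1 - a)%:C * \tr (gf *m Phi gi)
       + (a * (1 - c))%:C * \tr (gf *m Phi taud)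
       + (a * c)%:C * \tr (gf *m Phi tauc)).
Proof.
move=> hsi hsf _ hb _ _ _ [_ _ hrho _] [_ _ _ htau _] gi gf dF.
case: (posnP d) => [d0 | d0].
  subst d.
  have tr0 : forall A : 'M[R[i]]_0, \tr A = 0 by move=> A; rewrite /mxtrace big_ord0.
  rewrite /epm_avg /epm_p big1 => [|l _]; last by rewrite big1 // => k _; rewrite tr0 !mul0r.
  by rewrite !tr0 !mulr0 !addr0 mul0r.
have [Zip _] := @partZ_gt0 R d mi Ei Pi beta d0 hsi.
have [Zfp _] := @partZ_gt0 R d mf Ef Pf beta d0 hsf.
set Zi := partZ Ei Pi beta in Zip *.
set Zf := partZ Ef Pf beta in Zfp *.
have key : forall l k, expR (- beta * ((Ef k - Ei l) - dF)) =
   (Zi * expR (beta * Ei l)) * (Zf^-1 * expR (- beta * Ef k)).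
  move=> l k; rewrite /dF /freeEnergyDiff -/Zi -/Zf.
  have -> : - beta * (Ef k - Ei l - - beta^-1 * ln (Zf / Zi))
     = (- beta * Ef k) + (beta * Ei l) + - ln (Zf / Zi).
    by field; rewrite gt_eqF.
  rewrite !expRD expRN lnK ?posrE ?divr_gt0 // invf_div.
  by field; rewrite gt_eqF.
rewrite /epm_avg /epm_p.
transitivity ((\sum_l \tr (rho *m Pi l) * (Zi * expR (beta * Ei l))%:C)
   * (\sum_k \tr (Phi rho *m Pf k) * (Zf^-1 * expR (- beta * Ef k))%:C)).
  rewrite mulr_suml; apply: eq_bigr => l _; rewrite mulr_sumr; apply: eq_bigr => k _.
  by rewrite key rmorphM; ring.
have [hinv hu] := @gibbs_inv R d mi Ei Pi beta d0 hsi.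
congr (_ * _).
  have -> : \sum_l \tr (rho *m Pi l) * (Zi * expR (beta * Ei l))%:C = \tr (invmx gi *m rho).
    rewrite /gi hinv mulmx_suml tr_sum; apply: eq_bigr => l _.
    by rewrite -scalemxAl mxtraceZ mxtrace_mulC mulrC.
  rewrite hrho htau !mulmxDr !mxtraceD -(scalemxAr _ (invmx gi) gi) mxtraceZ mulVmx // mxtrace1.
  rewrite -scalemxAr mxtraceZ !mulmxDr !mxtraceD -!scalemxAr !mxtraceZ !rmorphM.
  ring.
rewrite -tr_gibbs -/gf.
rewrite hrho htau !linearD !linearZ /=.
rewrite !rmorphM.
ring.
Qed.
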